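(* Let $N\ge 1$ be an integer and let $\mu$ be a real number with $-N<\mu<1$. Then every complex root of the polynomial $$p(\lambda)=\lambda^{N}-\frac{\mu}{N}\big(\lambda^{N-1}+\lambda^{N-2}+\cdots+\lambda+1\big)$$ lies in the open unit disc $\{\lambda\in\mathbb{C}:|\lambda|<1\}$.
   Context: This is the characteristic polynomial $\lambda^N-\mu(a_1\lambda^{N-1}+\cdots+a_N)$ of the delayed feedback control for a fixed point (1-cycle) with multiplier $\mu$, using uniform coefficients $a_1=\cdots=a_N=1/N$; the claim is that this polynomial is Schur stable for all $\mu\in(-N,1)$. *)

(* Defs.v *)
From HB Require Import structures.
From mathcomp Require Import all_boot all_order all_algebra.
From mathcomp Require Import complex.
Set Implicit Arguments. Unset Strict Implicit. Unset Printing Implicit Defensive.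
Import Order.TTheory GRing.Theory Num.Theory.
Local Open Scope ring_scope.
Local Open Scope complex_scope.

Definition dfc_poly (R : rcfType) (N : nat) (mu : R) : {poly R[i]} :=
  'X^N - ((mu / N%:R)%:C)%:P * \sum_(i < N) 'X^i.

(* Main.v *)
Require Import Defs.
From HB Require Import structures.
From mathcomp Require Import all_boot all_order all_algebra.
From mathcomp Require Import complex.
From mathcomp Require Import ring lra.
Import Order.TTheory GRing.Theory Num.Theory.
Local Open Scope ring_scope.
Local Open Scope complex_scope.

Lemma pos_case (R : rcfType) (N : nat) (mu : R) z :
  (1 <= N)%N -> 0 <= mu -> mu < 1 ->
  z ^+ N = (mu / N%:R)%:C * \sum_(i < N) z ^+ i ->
  forall r, `|z| = r%:C -> 1 <= r -> False.
Proof.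
move=> N1 mu0 mu1 H r Hr r1.
have HN : (0 < N%:R :> R) by rewrite ltr0n.
have A0 : 0 <= mu / N%:R by rewrite divr_ge0 // ltW.
have : `|z| ^+ N <= (mu / N%:R)%:C * \sum_(i < N) `|z| ^+ i.
  rewrite -normrX H normrM ger0_norm ?ler0c //.
  apply: ler_wpM2l; first by rewrite ler0c.
  by apply: le_trans (ler_norm_sum _ _ _) _; apply: ler_sum => i _; rewrite normrX.
rewrite Hr -rmorphXn.
under eq_bigr do rewrite -rmorphXn.
rewrite -rmorph_sum -rmorphM lecR => Hle.
have Hs : \sum_(i < N) r ^+ i <= N%:R * r ^+ N.-1.
  have -> : N%:R * r ^+ N.-1 = \sum_(i < N) r ^+ N.-1
    by rewrite sumr_const card_ord mulr_natl.
  apply: ler_sum => i _; apply: ler_weXn2l => //.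
  by case: i => i /= ; case: N {H Hle HN A0 N1} => // n; rewrite ltnS.
case: N N1 {H} HN A0 Hle Hs => // n _ HN A0 Hle Hs.
have p0 : 0 < r ^+ n by apply: exprn_gt0; lra.
have := le_trans Hle (ler_wpM2l A0 Hs).
rewrite exprS /=  => H2.
have H3 : r * r ^+ n <= mu * r ^+ n.
  by move: H2; rewrite mulrA mulfVK ?gt_eqF.

have : r <= mu by rewrite -(ler_pM2r p0).
lra.
Qed.
Lemma alg_id (T : comNzRingType) (z P A S : T) : P = A * S -> P - 1 = (z - 1) * S ->
   P * (z - (1 + A)) = - A.
Proof. move=> H1 H2. have : (z - 1) * P = A * (P - 1) by rewrite H2 H1; ring.
move=> E; have -> : P * (z - (1 + A)) = (z - 1) * P - A * (P - 1) - A by ring.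
by rewrite E subrr sub0r. Qed.

Lemma neg_case (R : rcfType) (N : nat) (a : R) (x y : R) :
  (1 <= N)%N -> -1 < a -> a < 0 ->
  (x +i* y) ^+ N = a%:C * \sum_(i < N) (x +i* y) ^+ i ->
  forall r, `|x +i* y| = r%:C -> 1 <= r -> False.
Proof.
move=> N1 a1 a0 H r Hr r1.
have E := @alg_id _ (x +i* y) _ _ _ H (subrX1 _ _).
have E2 : `|(x +i* y) ^+ N| ^+ 2 * `|x +i* y - (1 + a%:C)| ^+ 2 = `|- a%:C| ^+ 2.
  by rewrite -exprMn -normrM E.
move: E2; rewrite normrX Hr normrN [`|a%:C|]ler0_norm; last by rewrite lecR; lra.
rewrite -add_Re2_Im2 -!rmorphXn -rmorphN -!rmorphXn -!rmorphM => /complexI.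
have -> : complex.Re (x +i* y - (1 + a%:C)) = x - (1 + a) by [].
have -> : complex.Im (x +i* y - (1 + a%:C)) = y by rewrite /= addr0 subr0.
move=> Eq.
have Hs : x ^+ 2 + y ^+ 2 = r ^+ 2.
  by apply: complexI; have := add_Re2_Im2 (x +i* y); rewrite Hr -rmorphXn.
have r0 : 0 <= r by lra.
have sN : 1 <= r ^+ N ^+ 2 by rewrite -exprM exprn_ege1.
have q0 : 0 <= (x - (1 + a)) ^+ 2 + y ^+ 2 by rewrite addr_ge0 ?sqr_ge0.
have qa : (x - (1 + a)) ^+ 2 + y ^+ 2 <= a ^+ 2.
  move: Eq; rewrite sqrrN => <-; rewrite ler_peMl //.
have x1 : 1 <= x by nra.
have x1' : x <= 1 by nra.
have xe : x = 1 by lra.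
have ye : y = 0 by nra.
move: H; rewrite xe ye.
have -> : 1 +i* 0 = 1 :> R[i] by [].
rewrite expr1n.
under eq_bigr do rewrite expr1n.
have hN : (N%:R : R)%:C = N%:R by rewrite rmorph_nat.
rewrite sumr_const card_ord -mulr_natr -hN.
have h1 : (1 : R)%:C = 1 by []. rewrite -h1 mul1r -rmorphM => /(f_equal (fun w : R[i] => let: u +i* _ := w in u)) /=.
have : 0 < N%:R :> R by rewrite ltr0n.
nra.
Qed.

Lemma root_eq (R : rcfType) (N : nat) (mu : R) z : root (dfc_poly N mu) z ->
  z ^+ N = (mu / N%:R)%:C * \sum_(i < N) z ^+ i.
Proof.
rewrite /root /dfc_poly !hornerE horner_sum subr_eq0 => /eqP ->.
by under eq_bigr do rewrite hornerXn.
Qed.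

Theorem mainTheorem3 (R : rcfType) (N : nat) (mu : R) :
  (1 <= N)%N -> - (N%:R) < mu -> mu < 1 ->
  forall z : R[i], root (dfc_poly N mu) z -> `|z| < 1.
Proof.
move=> N1 muN mu1 z /root_eq H.
have Hr := normc_def z.
set r := Num.sqrt _ in Hr.
have h1 : (1 : R)%:C = 1 by [].
rewrite Hr -h1 ltcR ltNge; apply/negP => r1.
have HN : (0 < N%:R :> R) by rewrite ltr0n.
case: (lerP 0 mu) => mu0.
  exact: (@pos_case R N mu z N1 mu0 mu1 H r Hr r1).
clearbody r; case: z H Hr => x y H Hr.
apply: (@neg_case R N (mu / N%:R) x y N1 _ _ H r Hr r1).
  by rewrite ltr_pdivlMr // mulN1r.
by rewrite pmulr_llt0 ?invr_gt0.
Qed.
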